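(* Let $\Gamma=(V,\nu,\mu)$ be a fuzzy graph on $n$ vertices with fuzzy complement $\overline{\Gamma}$. For $v\in V$ put $d_{\max}(v)=\sum_{u\ne v}\min(\nu(v),\nu(u))$, $\lambda_{\max}=\frac1n\sum_{v\in V}d_{\max}(v)$, $e(v)=d_{\max}(v)-\lambda_{\max}$, and $E=\frac1n\sum_{v\in V}e(v)^2$. Then $$2\,\sigma^*(\Gamma)+E-2\sqrt{\sigma^*(\Gamma)\,E}\;\le\;\sigma^*(\Gamma)+\sigma^*(\overline{\Gamma})\;\le\;2\,\sigma^*(\Gamma)+E+2\sqrt{\sigma^*(\Gamma)\,E}.$$
   Context: A fuzzy graph $\Gamma=(V,\nu,\mu)$ consists of a finite vertex set $V$ with $|V|=n\ge1$, a map $\nu:V\to[0,1]$, and a symmetric map $\mu:V\times V\to[0,1]$ with $\mu(u,v)\le\min(\nu(u),\nu(v))$. The fuzzy degree is $d_\Gamma(v)=\sum_{u\ne v}\mu(v,u)$, the fuzzy size is $\mathrm{ew}(\Gamma)=\frac12\sum_v d_\Gamma(v)$, $\lambda=2\,\mathrm{ew}(\Gamma)/n$, and the fuzzy sigma index is $\sigma^*(\Gamma)=\frac1n\sum_{v}(d_\Gamma(v)-\lambda)^2$. The fuzzy complement $\overline{\Gamma}=(V,\nu,\overline{\mu})$ has $\overline{\mu}(u,v)=\min(\nu(u),\nu(v))-\mu(u,v)$ for $u\ne v$. *)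

(* Defs.v *)
From mathcomp Require Import all_boot all_order all_algebra.
Set Implicit Arguments. Unset Strict Implicit. Unset Printing Implicit Defensive.
Import Order.TTheory GRing.Theory Num.Theory.
Local Open Scope ring_scope.

Definition is_fuzzy_graph (R : realFieldType) (T : finType)
  (nu : T -> R) (mu : T -> T -> R) : Prop :=
  (forall v, 0 <= nu v <= 1) /\
  (forall u v, 0 <= mu u v <= 1) /\
  (forall u v, mu u v = mu v u) /\
  (forall u v, mu u v <= Num.min (nu u) (nu v)).

Section Fuzzy.
Variables (R : realFieldType) (T : finType).

Definition fdeg (mu : T -> T -> R) (v : T) : R := \sum_(u | u != v) mu v u.
Definition fsize (mu : T -> T -> R) : R := (\sum_v fdeg mu v) / 2.
Definition flambda (mu : T -> T -> R) : R := 2 * fsize mu / #|T|%:R.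
Definition fsigma (mu : T -> T -> R) : R :=
  (\sum_v (fdeg mu v - flambda mu) ^+ 2) / #|T|%:R.
Definition fcompl (nu : T -> R) (mu : T -> T -> R) : T -> T -> R :=
  fun u v => if u == v then mu u v else Num.min (nu u) (nu v) - mu u v.

Definition dmax (nu : T -> R) (v : T) : R :=
  \sum_(u | u != v) Num.min (nu v) (nu u).
Definition lambda_max (nu : T -> R) : R := (\sum_v dmax nu v) / #|T|%:R.
Definition emax (nu : T -> R) (v : T) : R := dmax nu v - lambda_max nu.
Definition Emax (nu : T -> R) : R := (\sum_v emax nu v ^+ 2) / #|T|%:R.
End Fuzzy.

(* Main.v *)
Require Import Defs.
From mathcomp Require Import all_boot all_order all_algebra.
From mathcomp Require Import ring lra.
Import Order.TTheory GRing.Theory Num.Theory.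
Local Open Scope ring_scope.

Lemma cs_sum (R : realFieldType) (T : finType) (a b : T -> R) :
  (\sum_v a v * b v) ^+ 2 <= (\sum_v a v ^+ 2) * (\sum_v b v ^+ 2).
Proof.
have H : 0 <= \sum_v \sum_w (a v * b w - a w * b v) ^+ 2.
  by apply: sumr_ge0 => v _; apply: sumr_ge0 => w _; exact: sqr_ge0.
have E : \sum_v \sum_w (a v * b w - a w * b v) ^+ 2 =
   2 * ((\sum_v a v ^+ 2) * (\sum_v b v ^+ 2) - (\sum_v a v * b v) ^+ 2).
  have E1 : forall v w, (a v * b w - a w * b v) ^+ 2 =
     a v ^+ 2 * b w ^+ 2 + a w ^+ 2 * b v ^+ 2 - 2 * ((a v * b v) * (a w * b w)).
    by move=> v w; ring.
  set A := \sum_v a v ^+ 2. set B := \sum_v b v ^+ 2. set C := \sum_v a v * b v.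
  have I : forall v, \sum_w (a v * b w - a w * b v) ^+ 2 =
     a v ^+ 2 * B + A * b v ^+ 2 - 2 * (a v * b v) * C.
    move=> v; under eq_bigr do rewrite E1.
    rewrite sumrB big_split /= /A /B /C !mulr_sumr mulr_suml.
    congr (_ + _ - _); apply: eq_bigr => w _; ring.
  under eq_bigr do rewrite I.
  rewrite sumrB big_split /= -!mulr_suml -!mulr_sumr -/A -/B -/C.
  ring.
rewrite E in H.
lra.
Qed.

Theorem corollary2p13 (R : rcfType) (T : finType) (nu : T -> R) (mu : T -> T -> R) :
  (0 < #|T|)%N -> is_fuzzy_graph nu mu ->
  let s := fsigma mu in
  let sc := fsigma (fcompl nu mu) in
  let E := Emax nu in
  2 * s + E - 2 * Num.sqrt (s * E) <= s + sc /\
  s + sc <= 2 * s + E + 2 * Num.sqrt (s * E).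
Proof.
move=> n0 _ s sc E.
set n : R := #|T|%:R.
have nz : n != 0 by rewrite pnatr_eq0 -lt0n.
set x := fun v => fdeg mu v - flambda mu.
set e := fun v => emax nu v.
have dc : forall v, fdeg (fcompl nu mu) v = dmax nu v - fdeg mu v.
  move=> v; rewrite /fdeg /dmax -sumrB; apply: eq_bigr => u uv.
  by rewrite /fcompl eq_sym (negbTE uv).
have fl : forall m : T -> T -> R, flambda m = (\sum_v fdeg m v) / n.
  by move=> m; rewrite /flambda /fsize; field.
have xc : forall v, fdeg (fcompl nu mu) v - flambda (fcompl nu mu) = e v - x v.
  move=> v; rewrite /e /x /emax /lambda_max !fl dc.
  under eq_bigr do rewrite dc.
  by rewrite sumrB -/n; field.
have scE : sc = ((\sum_v e v ^+ 2) + (\sum_v x v ^+ 2) - 2 * \sum_v e v * x v) / n.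
  rewrite /sc /fsigma; under eq_bigr do rewrite xc.
  congr (_ / _).
  rewrite mulr_sumr -big_split -sumrB; apply: eq_bigr => v _ /=; ring.
have sE : s = (\sum_v x v ^+ 2) / n by [].
have EE : E = (\sum_v e v ^+ 2) / n by [].
set A := \sum_v x v ^+ 2 in sE scE.
set B := \sum_v e v ^+ 2 in EE scE.
set D := \sum_v e v * x v in scE.
have cs : D ^+ 2 <= B * A by apply: cs_sum.
have n0' : 0 < n by rewrite ltr0n.
have key : `|D / n| <= Num.sqrt (s * E).
  rewrite -sqrtr_sqr; apply: ler_wsqrtr.
  rewrite sE EE expr_div_n.
  have -> : A / n * (B / n) = (B * A) / n ^+ 2 by rewrite expr2; field.
  by apply: ler_pM => //; [exact: sqr_ge0|rewrite invr_ge0 exprn_ge0 ?ltW].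
have eq : s + sc = 2 * s + E - 2 * (D / n).
  by rewrite scE sE EE; field.
move: key; rewrite ler_norml => /andP [h1 h2].
rewrite eq; split; lra.
Qed.
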